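(* Let $\Lambda:=U(2)^{\oplus 3}\oplus E_8\oplus A_1^{\oplus 2}$ and let $u\in D_\Lambda=\Lambda^\vee/\Lambda$ satisfy $q(u)=1+2\mathbb{Z}$. Then there exists $x\in\Lambda$ with $x^2=-4$, $x.\Lambda=2\mathbb{Z}$ and $u=x/2+\Lambda$.
   Context: $U$ is the hyperbolic plane, $L(n)$ denotes $L$ with form scaled by $n$, ADE root lattices are negative definite. $q\colon D_\Lambda\to\mathbb{Q}/2\mathbb{Z}$ is the discriminant quadratic form $q(y+\Lambda)=y^2+2\mathbb{Z}$. *)

(* Defs.v *)
From HB Require Import structures.
From mathcomp Require Import all_boot all_order all_algebra.
Set Implicit Arguments. Unset Strict Implicit. Unset Printing Implicit Defensive.
Import Order.TTheory GRing.Theory Num.Theory.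
Local Open Scope ring_scope.

(* Lattices are given by integral Gram matrices on Z^n (column vectors). *)

Definition osum (m n : nat) (A : 'M[int]_m) (B : 'M[int]_n) : 'M[int]_(m + n) :=
  block_mx A 0 0 B.

Definition U2 : 'M[int]_2 := \matrix_(i < 2, j < 2) (if i == j then 0 else 2).

Definition A1 : 'M[int]_1 := \matrix_(i < 1, j < 1) (-2).

(* E_8, negative definite: minus the Cartan matrix (Bourbaki numbering,
   0-indexed: edges 0-2, 2-3, 3-4, 4-5, 5-6, 6-7, 1-3). *)
Definition E8_edge (i j : nat) : bool :=
  [|| (i, j) == (0, 2)%N, (i, j) == (2, 3)%N, (i, j) == (3, 4)%N,
      (i, j) == (4, 5)%N, (i, j) == (5, 6)%N, (i, j) == (6, 7)%N
    | (i, j) == (1, 3)%N].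
Definition E8 : 'M[int]_8 :=
  \matrix_(i < 8, j < 8)
    (if i == j then -2 else if E8_edge i j || E8_edge j i then 1 else 0).

Definition LamN : nat := (2 + (2 + 2)) + (8 + (1 + 1)).
Definition LamGram : 'M[int]_LamN :=
  osum (osum U2 (osum U2 U2)) (osum E8 (osum A1 A1)).

Definition bform (x y : 'cV[int]_LamN) : int := (x^T *m LamGram *m y) 0 0.
Definition bformQ (x y : 'cV[rat]_LamN) : rat :=
  (x^T *m map_mx intr LamGram *m y) 0 0.

Definition int_vec (v : 'cV[rat]_LamN) : Prop :=
  exists z : 'cV[int]_LamN, v = map_mx intr z.

Definition in_dual (y : 'cV[rat]_LamN) : Prop :=
  forall z : 'cV[int]_LamN, bformQ y (map_mx intr z) \is a Num.int.

(* Main.v *)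
Require Import Defs.
From HB Require Import structures.
From mathcomp Require Import all_boot all_order all_algebra.
From mathcomp Require Import ring lra zify.
Set Implicit Arguments. Unset Strict Implicit. Unset Printing Implicit Defensive.
Import Order.TTheory GRing.Theory Num.Theory.
Local Open Scope ring_scope.

Section Gen.
Variable R : comNzRingType.

Lemma form_block m n (A : 'M[R]_m) (B : 'M[R]_n) (a c : 'cV[R]_m) (b d : 'cV[R]_n) :
  (col_mx a b)^T *m block_mx A 0 0 B *m col_mx c d = a^T *m A *m c + b^T *m B *m d.
Proof.
by rewrite tr_col_mx mul_row_block !mulmx0 addr0 add0r mul_row_col.
Qed.

Definition G (U : 'M[R]_2) (E : 'M[R]_8) (A : 'M[R]_1) : 'M[R]_LamN :=
  block_mx (block_mx U 0 0 (block_mx U 0 0 U)) 0 0 (block_mx E 0 0 (block_mx A 0 0 A)).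

Definition cv (x1 x2 x3 : 'cV[R]_2) (xE : 'cV[R]_8) (x5 x6 : 'cV[R]_1) : 'cV[R]_LamN :=
  col_mx (col_mx x1 (col_mx x2 x3)) (col_mx xE (col_mx x5 x6)).

Lemma formG U E A x1 x2 x3 xE x5 x6 z1 z2 z3 zE z5 z6 :
  (cv x1 x2 x3 xE x5 x6)^T *m G U E A *m cv z1 z2 z3 zE z5 z6 =
  x1^T *m U *m z1 + x2^T *m U *m z2 + x3^T *m U *m z3 + xE^T *m E *m zE
  + x5^T *m A *m z5 + x6^T *m A *m z6.
Proof. by rewrite !form_block !addrA. Qed.

Lemma cv_decomp (v : 'cV[R]_LamN) : exists x1 x2 x3 xE x5 x6, v = cv x1 x2 x3 xE x5 x6.
Proof.
rewrite -[v]vsubmxK -[usubmx v]vsubmxK -[dsubmx v]vsubmxK.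
rewrite -[dsubmx (usubmx v)]vsubmxK -[dsubmx (dsubmx v)]vsubmxK.
by do 6 eexists.
Qed.

Lemma cv_lin (c : R) x1 x2 x3 xE x5 x6 z1 z2 z3 zE z5 z6 :
  c *: cv x1 x2 x3 xE x5 x6 - cv z1 z2 z3 zE z5 z6 =
  cv (c *: x1 - z1) (c *: x2 - z2) (c *: x3 - z3) (c *: xE - zE) (c *: x5 - z5) (c *: x6 - z6).
Proof. by rewrite /cv !scale_col_mx !opp_col_mx !add_col_mx. Qed.

Definition UR : 'M[R]_2 := \matrix_(i < 2, j < 2) (if i == j then 0 else 2).
Definition AR : 'M[R]_1 := \matrix_(i < 1, j < 1) (-2).

Lemma formU (a b : 'cV[R]_2) :
  (a^T *m UR *m b) 0 0 = 2 * (a 0 0 * b 1 0 + a 1 0 * b 0 0).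
Proof.
rewrite !mxE !big_ord_recr !big_ord0 /= !mxE !big_ord_recr !big_ord0 /= !mxE /=.
have -> : widen_ord (m:=2) (leqnSn 1) ord_max = 0 by apply/val_inj.
have -> : (ord_max : 'I_2) = 1 by apply/val_inj.
ring.
Qed.

Lemma formA (a b : 'cV[R]_1) :
  (a^T *m AR *m b) 0 0 = -2 * (a 0 0 * b 0 0).
Proof.
rewrite !mxE !big_ord_recr !big_ord0 /= !mxE !big_ord_recr !big_ord0 /= !mxE /=.
have -> : (ord_max : 'I_1) = 0 by apply/val_inj.
ring.
Qed.

Definition col2 (u v : R) : 'cV[R]_2 := \col_(i < 2) (if i == 0 then u else v).
Definition col1 (u : R) : 'cV[R]_1 := \col_(i < 1) u.

Lemma col2_0 u v : col2 u v 0 0 = u. Proof. by rewrite mxE. Qed.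
Lemma col2_1 u v : col2 u v 1 0 = v. Proof. by rewrite mxE. Qed.
Lemma col1_0 u : col1 u 0 0 = u. Proof. by rewrite mxE. Qed.

Lemma col2E (a : 'cV[R]_2) : a = col2 (a 0 0) (a 1 0).
Proof.
apply/matrixP=> i j; rewrite ord1 !mxE.
case: i => [[|[|//]] Hi] /=; congr (a _ _); exact/val_inj.
Qed.
Lemma col1E (a : 'cV[R]_1) : a = col1 (a 0 0).
Proof. by apply/matrixP=> i j; rewrite !ord1 !mxE. Qed.

Lemma addE m n (A B : 'M[R]_(m, n)) i j : (A + B) i j = A i j + B i j.
Proof. by rewrite mxE. Qed.
Lemma scaleE m n c (A : 'M[R]_(m, n)) i j : (c *: A) i j = c * A i j.
Proof. by rewrite mxE. Qed.
Lemma zeroE m n i j : (0 : 'M[R]_(m, n)) i j = 0.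
Proof. by rewrite mxE. Qed.

End Gen.

Lemma LamGramE : LamGram = G U2 E8 A1.
Proof. by []. Qed.

Lemma LamGramQ : map_mx intr LamGram = G (map_mx intr U2) (map_mx intr E8) (map_mx intr A1) :> 'M[rat]_LamN.
Proof. by rewrite /LamGram /osum !map_block_mx !map_mx0. Qed.

Lemma map_cv (x1 x2 x3 : 'cV[int]_2) xE x5 x6 :
  map_mx intr (cv x1 x2 x3 xE x5 x6) = cv (map_mx intr x1) (map_mx intr x2) (map_mx intr x3)
     (map_mx intr xE) (map_mx intr x5) (map_mx intr x6) :> 'cV[rat]_LamN.
Proof. by rewrite /cv !map_col_mx. Qed.

Lemma U2Q : map_mx intr U2 = UR rat.
Proof. by apply/matrixP=> i j; rewrite !mxE; case: (i == j). Qed.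
Lemma A1Q : map_mx intr A1 = AR rat.
Proof. by apply/matrixP=> i j; rewrite !mxE. Qed.
Lemma U2Z : U2 = UR int.
Proof. by apply/matrixP=> i j; rewrite !mxE. Qed.
Lemma A1Z : A1 = AR int.
Proof. by apply/matrixP=> i j; rewrite !mxE. Qed.

Lemma bformQ_cv x1 x2 x3 xE x5 x6 z1 z2 z3 zE z5 z6 :
  bformQ (cv x1 x2 x3 xE x5 x6) (cv z1 z2 z3 zE z5 z6) =
  2 * (x1 0 0 * z1 1 0 + x1 1 0 * z1 0 0) + 2 * (x2 0 0 * z2 1 0 + x2 1 0 * z2 0 0)
  + 2 * (x3 0 0 * z3 1 0 + x3 1 0 * z3 0 0) + (xE^T *m map_mx intr E8 *m zE) 0 0
  + -2 * (x5 0 0 * z5 0 0) + -2 * (x6 0 0 * z6 0 0).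
Proof. by rewrite /bformQ LamGramQ U2Q A1Q formG !addE !formU !formA. Qed.

Lemma bform_cv x1 x2 x3 xE x5 x6 z1 z2 z3 zE z5 z6 :
  bform (cv x1 x2 x3 xE x5 x6) (cv z1 z2 z3 zE z5 z6) =
  2 * (x1 0 0 * z1 1 0 + x1 1 0 * z1 0 0) + 2 * (x2 0 0 * z2 1 0 + x2 1 0 * z2 0 0)
  + 2 * (x3 0 0 * z3 1 0 + x3 1 0 * z3 0 0) + (xE^T *m E8 *m zE) 0 0
  + -2 * (x5 0 0 * z5 0 0) + -2 * (x6 0 0 * z6 0 0).
Proof. by rewrite /bform LamGramE U2Z A1Z formG !addE !formU !formA. Qed.
Definition E8invL : seq (seq int) :=
 [:: [:: -4; -5; -7; -10; -8; -6; -4; -2]; [:: -5; -8; -10; -15; -12; -9; -6; -3]; [:: -7; -10; -14; -20; -16; -12; -8; -4]; [:: -10; -15; -20; -30; -24; -18; -12; -6]; [:: -8; -12; -16; -24; -20; -15; -10; -5]; [:: -6; -9; -12; -18; -15; -12; -8; -4]; [:: -4; -6; -8; -12; -10; -8; -6; -3]; [:: -2; -3; -4; -6; -5; -4; -3; -2]].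
Definition E8inv : 'M[int]_8 := \matrix_(i < 8, j < 8) nth 0 (nth [::] E8invL i) j.


Lemma E8inv_ok : E8inv *m E8 = 1%:M.
Proof.
apply/matrixP=> i j; rewrite !mxE.
under eq_bigr do rewrite !mxE.
rewrite !big_ord_recr big_ord0 /=.
by case: i => [[|[|[|[|[|[|[|[|//]]]]]]]] ?]; case: j => [[|[|[|[|[|[|[|[|//]]]]]]]] ?].
Qed.
Definition E8N : 'M[int]_8 := \matrix_(i < 8, j < 8) (E8_edge i j)%:R.

Lemma E8_N : E8 = E8N + E8N^T - 2%:M.
Proof.
apply/matrixP=> i j; rewrite !mxE.
by case: i => [[|[|[|[|[|[|[|[|//]]]]]]]] ?]; case: j => [[|[|[|[|[|[|[|[|//]]]]]]]] ?].
Qed.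

Lemma E8_sym : E8^T = E8.
Proof. by apply/matrixP=> i j; rewrite !mxE eq_sym orbC. Qed.

Lemma E8_even (v : 'cV[int]_8) : (v^T *m E8 *m v) 0 0 = 2 * ((v^T *m E8N *m v) 0 0 - (v^T *m v) 0 0).
Proof.
rewrite E8_N mulmxBr mulmxDr mulmxBl mulmxDl mul_mx_scalar -scalemxAl.
have -> : v^T *m E8N^T *m v = (v^T *m E8N *m v)^T by rewrite !trmx_mul trmxK mulmxA.
rewrite !mxE; ring.
Qed.

Definition d (i : 'I_8) : 'cV[int]_8 := delta_mx i 0.
Lemma dAd (A : 'M[int]_8) i j : ((d i)^T *m A *m d j) 0 0 = A i j.
Proof. by rewrite /d trmx_delta -rowE -colE !mxE. Qed.
Lemma c1 : ((d 0)^T *m E8 *m d 0) 0 0 = -2.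
Proof. by rewrite dAd mxE. Qed.
Lemma c2 : ((d 0 + d 1)^T *m E8 *m (d 0 + d 1)) 0 0 = -4.
Proof. by rewrite (raddfD (@trmx _ _ _)) !mulmxDl !mulmxDr !addE !dAd !mxE. Qed.
Lemma c3 : ((d 0)^T *m E8 *m d 2) 0 0 = 1.
Proof. by rewrite dAd mxE. Qed.
Lemma c4 : ((d 0 + d 1)^T *m E8 *m d 2) 0 0 = 1.
Proof. by rewrite (raddfD (@trmx _ _ _)) !mulmxDl !addE !dAd !mxE. Qed.
Lemma par (z : int) : exists u, z = 2 * u \/ z = 2 * u + 1.
Proof.
exists (z %/ 2)%Z. have := divz_eq z 2. have := modz_ge0 z (isT : (2:int) != 0).
have := ltz_pmod z (isT : (0 < (2:int))). lia.
Qed.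

Lemma core (P Q k h : int) : exists p q a b (s : bool),
  [/\ p = P + 2 * a, q = Q + 2 * b & p * q = P * Q - 2 * k + 2 * h + (if s then 2 else 0)].
Proof.
have [u [EP|EP]] := par P.
- have [v [EQ|EQ]] := par Q.
  + have [m [Em|Em]] := par (k - h).
    * exists 2, (2 * (u * v - m)), (1 - u), (u * v - m - v), false.
      have -> : k = h + 2 * m by lia.
      subst; split; ring.
    * exists 2, (2 * (u * v - m)), (1 - u), (u * v - m - v), true.
      have -> : k = h + 2 * m + 1 by lia.
      subst; split; ring.
  + exists (P * Q - 2 * k + 2 * h), 1, (2 * u * v - k + h), (- v), false.
    subst; split; ring.
- exists 1, (P * Q - 2 * k + 2 * h), (- u), (u * Q - k + h), false.
  subst; split; ring.
Qed.

Lemma E_int (yE : 'cV[rat]_8) :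
  (forall zE : 'cV[int]_8, (yE^T *m map_mx intr E8 *m map_mx intr zE) 0 0 \is a Num.int) ->
  exists yEi, yE = map_mx intr yEi.
Proof.
move=> H.
have Hr j : (map_mx intr E8 *m yE) j 0 \is a Num.int.
  move: (H (d j)).
  have -> : map_mx intr (d j) = delta_mx j 0 :> 'cV[rat]_8.
    by apply/matrixP=> a b; rewrite !mxE; case: (_ && _).
  rewrite -colE mxE.
  rewrite [X in X \is a _ -> _](_ : _ = ((map_mx intr E8 *m yE)^T) 0 j); first by rewrite mxE.
  by rewrite trmx_mul map_trmx E8_sym.
have Einv : map_mx intr E8inv *m map_mx intr E8 = 1%:M :> 'M[rat]_8.
  by rewrite -map_mxM E8inv_ok map_scalar_mx rmorph1.
have Ey : yE = map_mx intr E8inv *m (map_mx intr E8 *m yE) by rewrite mulmxA Einv mul1mx.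
exists (map_mx Num.floor yE); apply/matrixP=> i j; rewrite ord1 !mxE floorK //.
rewrite Ey mxE; apply: rpred_sum => l _; apply: rpredM; last exact: Hr.
by rewrite mxE; apply: rpred_int.
Qed.


Lemma half2 (a : 'cV[rat]_2) : 2 * a 0 0 \is a Num.int -> 2 * a 1 0 \is a Num.int ->
  exists P Q : int, a = col2 (P%:~R / 2) (Q%:~R / 2).
Proof.
move=> h0 h1; exists (Num.floor (2 * a 0 0)), (Num.floor (2 * a 1 0)).
rewrite !floorK // [LHS]col2E; congr col2; field; by [].
Qed.

Lemma half1 (a : 'cV[rat]_1) : 2 * a 0 0 \is a Num.int -> exists C : int, a = col1 (C%:~R / 2).
Proof.
move=> h0; exists (Num.floor (2 * a 0 0)).
rewrite !floorK // [LHS]col1E; congr col1; field; by [].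
Qed.

Lemma sclE (c : int) (u w : 'cV[int]_8) :
  ((c *: u)^T *m E8 *m w) 0 0 = c * (u^T *m E8 *m w) 0 0.
Proof. by rewrite [(_ *: _)^T]linearZ /= -!scalemxAl scaleE. Qed.
Lemma scrE (c : int) (u w : 'cV[int]_8) :
  (u^T *m E8 *m (c *: w)) 0 0 = c * (u^T *m E8 *m w) 0 0.
Proof. by rewrite -scalemxAr scaleE. Qed.

Lemma cne (s : bool) : let e := if s then d 0 + d 1 else d 0 in
  (e^T *m E8 *m e) 0 0 = if s then -4 else -2.
Proof. by case: s; [exact: c2 | exact: c1]. Qed.
Lemma ce2 (s : bool) : let e := if s then d 0 + d 1 else d 0 in
  (e^T *m E8 *m d 2) 0 0 = 1.
Proof. by case: s; [exact: c4 | exact: c3]. Qed.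

Lemma oppE m n (A : 'M[rat]_(m, n)) i j : (- A) i j = - A i j.
Proof. by rewrite mxE. Qed.
Lemma mapE m n (A : 'M[int]_(m, n)) i j : (map_mx intr A : 'M[rat]_(m, n)) i j = (A i j)%:~R.
Proof. by rewrite mxE. Qed.
Lemma col2_00 : col2 0 0 = 0 :> 'cV[rat]_2.
Proof. by apply/matrixP=> i j; rewrite !mxE; case: ifP. Qed.
Lemma col1_00 : col1 0 = 0 :> 'cV[rat]_1.
Proof. by apply/matrixP=> i j; rewrite !mxE. Qed.

Ltac dsimp := rewrite map_cv bformQ_cv !map_mx0 ?mulmx0 !zeroE ?[map_mx _ _ _ _]mxE
  ?col2_0 ?col2_1 ?col1_0 /= ?(mulr0, mulr1, addr0, add0r, rmorph0, rmorph1, mul0r).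

Unset Implicit Arguments.

Theorem lemma3p3 (y : 'cV[rat]_LamN) :
  in_dual y ->
  (exists k : int, bformQ y y = 1 + 2 * k%:~R) ->
  exists x : 'cV[int]_LamN,
    [/\ bform x x = -4,
        (forall m : int, (exists z, bform x z = m) <-> (2 %| m)%Z)
      & int_vec ((1 / 2) *: map_mx intr x - y)].
Proof.
move=> Hd [k Hk].
have [yU1 [yU2 [yU3 [yE [yA1 [yA2 Ey]]]]]] := cv_decomp y; subst y.
have hU1a : 2 * yU1 0 0 \is a Num.int by move: (Hd (cv (col2 0 1) 0 0 0 0 0)); dsimp.
have hU1b : 2 * yU1 1 0 \is a Num.int by move: (Hd (cv (col2 1 0) 0 0 0 0 0)); dsimp.
have hU2a : 2 * yU2 0 0 \is a Num.int by move: (Hd (cv 0 (col2 0 1) 0 0 0 0)); dsimp.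
have hU2b : 2 * yU2 1 0 \is a Num.int by move: (Hd (cv 0 (col2 1 0) 0 0 0 0)); dsimp.
have hU3a : 2 * yU3 0 0 \is a Num.int by move: (Hd (cv 0 0 (col2 0 1) 0 0 0)); dsimp.
have hU3b : 2 * yU3 1 0 \is a Num.int by move: (Hd (cv 0 0 (col2 1 0) 0 0 0)); dsimp.
have hA1 : 2 * yA1 0 0 \is a Num.int.
  move: (Hd (cv 0 0 0 0 (col1 1) 0)); dsimp; by rewrite mulNr rpredN.
have hA2 : 2 * yA2 0 0 \is a Num.int.
  move: (Hd (cv 0 0 0 0 0 (col1 1))); dsimp; by rewrite mulNr rpredN.
have hE : forall zE : 'cV[int]_8, (yE^T *m map_mx intr E8 *m map_mx intr zE) 0 0 \is a Num.int.
  by move=> zE; move: (Hd (cv 0 0 0 zE 0 0)); dsimp.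
move: Hk.
have [P1 [Q1 ->]] := half2 hU1a hU1b.
have [P2 [Q2 ->]] := half2 hU2a hU2b.
have [P3 [Q3 ->]] := half2 hU3a hU3b.
have [C1 ->] := half1 hA1.
have [C2 ->] := half1 hA2.
have [yEi ->] := E_int hE.
rewrite bformQ_cv !col2_0 !col2_1 !col1_0 map_trmx -!map_mxM mxE E8_even.
set h := (_ - _).
move=> Hk; clearbody h.
have HkZ : 2*P1*Q1 + 2*P2*Q2 + 2*P3*Q3 + 4*h - C1*C1 - C2*C2 = 2 + 4*k.
  apply/eqP; rewrite -(eqr_int rat); apply/eqP.
  rewrite !(intrD, intrB, intrM); move: Hk; rewrite ?intrM ?rmorphM /=.
  lra.
clear Hk.
have [p [q [a [b [sb [Ep Eq Epq]]]]]] := core P1 Q1 k h.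
pose e : 'cV[int]_8 := if sb then d 0 + d 1 else d 0.
have Hne : (e^T *m E8 *m e) 0 0 = if sb then -4 else -2.
  exact: cne.
have He2 : (e^T *m E8 *m d 2) 0 0 = 1.
  exact: ce2.
clearbody e.
exists (cv (col2 p q) (col2 P2 Q2) (col2 P3 Q3) (2 *: e) (col1 C1) (col1 C2)); split.
- rewrite bform_cv !col2_0 !col2_1 !col1_0 sclE scrE.
  move: Epq HkZ Hne; case: sb => Epq HkZ Hne; rewrite Hne; lia.
- move=> m; split.
  + move=> [z <-].
    have [z1 [z2 [z3 [zE [z5 [z6 ->]]]]]] := cv_decomp z.
    rewrite bform_cv sclE; lia.
  + move=> /dvdzP [t ->].
    exists (cv 0 0 0 (t *: d 2) 0 0).
    rewrite bform_cv sclE scrE He2 !zeroE; lia.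
- exists (cv (col2 a b) 0 0 (e - yEi) 0 0).
  rewrite !map_cv cv_lin !map_mx0; congr cv.
  + rewrite [LHS]col2E [RHS]col2E !addE !scaleE !oppE !mapE !col2_0 !col2_1.
    by rewrite Ep Eq !intrD !intrM; congr col2; (field; try done).
  + rewrite [LHS]col2E !addE !scaleE !oppE !mapE !col2_0 !col2_1.
    rewrite -col2_00; congr col2; (field; try done).
  + rewrite [LHS]col2E !addE !scaleE !oppE !mapE !col2_0 !col2_1.
    rewrite -col2_00; congr col2; (field; try done).
  + rewrite map_mxB map_mxZ scalerA.
    have -> : 1 / 2 * (2 : int)%:~R = 1 :> rat by (field; try done).
    by rewrite scale1r.
  + rewrite [LHS]col1E !addE !scaleE !oppE !mapE !col1_0 -col1_00; congr col1; (field; try done).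
  + rewrite [LHS]col1E !addE !scaleE !oppE !mapE !col1_0 -col1_00; congr col1; (field; try done).
Qed.
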